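(* Let $\mathcal G$ be a countably infinite set, $k$ an even positive integer and $\pi\in\mathcal B_{k/2}$. Then there exists a $\pi$-adopted sequence $G(\pi)=(G_1,\dots,G_k)\in\mathcal G^k$, and it is unique up to equivalence: any two $\pi$-adopted sequences are equivalent. Moreover $\#\{G_1,\dots,G_k\}=\frac k2+1$.
   Context: A pair-partition of $\{1,\dots,k\}$ is a partition all of whose blocks have exactly two elements; it is crossing if there exist $1\le a<b<c<d\le k$ with $\{a,c\},\{b,d\}\in\pi$, and non-crossing otherwise. For even $k$, $\mathcal B_{k/2}$ denotes the set of non-crossing pair-partitions of $\{1,\dots,k\}$. For $k\ge 4$, $\pi\in\mathcal B_{k/2}$ and a block $\{m,m+1\}\in\pi$ with $1\le m\le k-2$, $\pi\setminus^\bullet\{m,m+1\}\in\mathcal B_{k/2-1}$ denotes the pair-partition of $\{1,\dots,k-2\}$ obtained by deleting the block $\{m,m+1\}$ and relabelling every remaining element $a>m$ as $a-2$. $\pi$-adopted sequences. Let $\mathcal G$ be a countable set and $\pi\in\mathcal B_{k/2}$. A sequence $g=(g_1,\dots,g_k)\in\mathcal G^k$ is $\pi$-adopted, defined recursively in $k$, as follows. For $k=2$ (so $\pi=\{\{1,2\}\}$), $g$ is $\pi$-adopted iff $g_1\neq g_2$. For $k\ge 4$, $g$ is $\pi$-adopted iff for every block of $\pi$ of the form $\{m,m+1\}$ with $1\le m\le k-2$: (a) $g_m=g_{m+2}$ and $g_{m+1}\neq g_s$ for all $s\neq m+1$; and (b) the sequence $(g_1,\dots,g_m,g_{m+3},\dots,g_k)\in\mathcal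 G^{k-2}$, obtained by deleting $g_{m+1}$ and $g_{m+2}$, is $\pi\setminus^\bullet\{m,m+1\}$-adopted. Two sequences $g,h\in\mathcal G^k$ are equivalent if there is a bijection $\sigma:\mathcal G\to\mathcal G$ with $\sigma(g_i)=h_i$ for all $i$. *)

(* Defs.v *)
From mathcomp Require Import all_boot.
Set Implicit Arguments. Unset Strict Implicit. Unset Printing Implicit Defensive.

(* A pair-partition of {1,...,k} is represented as a list of blocks; the block
   {a,b} with a < b is stored as the pair (a,b). *)
Definition pairpart := seq (nat * nat).

Definition is_pairpart (k : nat) (pi : pairpart) : Prop :=
  (forall p, p \in pi -> p.1 < p.2) /\
  perm_eq (flatten [seq [:: p.1; p.2] | p <- pi]) (iota 1 k).

Definition crossing (pi : pairpart) : Prop :=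
  exists a b c d, [/\ a < b, b < c, c < d, (a, c) \in pi & (b, d) \in pi].

Definition is_NC_pairpart (k : nat) (pi : pairpart) : Prop :=
  is_pairpart k pi /\ ~ crossing pi.

Definition relab (m a : nat) : nat := if m < a then a - 2 else a.

Definition del_block (pi : pairpart) (m : nat) : pairpart :=
  [seq (relab m p.1, relab m p.2) | p <- pi & p != (m, m.+1)].

(* sequences (g_1,...,g_k) in G^k are represented as functions nat -> G;
   only the values at indices 1..k are relevant. *)
Definition del_seq (G : Type) (g : nat -> G) (m : nat) : nat -> G :=
  fun i => if i <= m then g i else g (i + 2).

Fixpoint adopted_rec (G : Type) (n : nat) (pi : pairpart) (g : nat -> G) : Prop :=
  match n with
  | 0 => True (* k = 0: never used *)
  | 1 => g 1 <> g 2
  | n'.+1 =>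
      forall m, 1 <= m -> m <= n.*2 - 2 -> (m, m.+1) \in pi ->
        (g m = g (m + 2) /\
         (forall s, 1 <= s -> s <= n.*2 -> s <> m.+1 -> g m.+1 <> g s)) /\
        adopted_rec n' (del_block pi m) (del_seq g m)
  end.

Definition adopted (G : Type) (k : nat) (pi : pairpart) (g : nat -> G) : Prop :=
  adopted_rec k./2 pi g.

Definition equiv_seq (G : Type) (k : nat) (g h : nat -> G) : Prop :=
  exists sigma : G -> G, bijective sigma /\
    forall i, 1 <= i -> i <= k -> sigma (g i) = h i.

(* Main.v *)
Require Import Defs.
From mathcomp Require Import all_boot zify.
From Stdlib Require Classical FunctionalExtensionality.
Set Implicit Arguments. Unset Strict Implicit. Unset Printing Implicit Defensive.

Definition flat (pi : pairpart) := flatten [seq [:: p.1; p.2] | p <- pi].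

Lemma flat_cons p pi : flat (p :: pi) = p.1 :: p.2 :: flat pi.
Proof. by []. Qed.

Lemma in_flat pi q x : q \in pi -> x \in [:: q.1; q.2] -> x \in flat pi.
Proof. by move=> qi xq; apply/flatten_mapP; exists q. Qed.

Lemma flat_in pi x : x \in flat pi -> exists2 q, q \in pi & x \in [:: q.1; q.2].
Proof. by move/flatten_mapP. Qed.

Lemma flat_disj pi p q x : uniq (flat pi) -> p \in pi -> q \in pi ->
  x \in [:: p.1; p.2] -> x \in [:: q.1; q.2] -> p = q.
Proof.
elim: pi => // r pi IH; rewrite flat_cons /= => /andP[r1 /andP[r2 u]].
have H : forall q, q \in pi -> x \in [:: r.1; r.2] -> x \in [:: q.1; q.2] -> False.
  move=> q' qi xr xq; have xf := in_flat qi xq.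
  move: xr; rewrite !inE => /orP[/eqP E|/eqP E]; subst x.
  + by move: r1; rewrite inE xf orbT.
  + by rewrite xf in r2.
move=> pin qin xp xq; move: pin qin; rewrite !in_cons => /orP[/eqP E|pin] /orP[/eqP E'|qin]; subst => //.
- by case: (H q qin xp xq).
- by case: (H p pin xq xp).
- exact: IH.
Qed.

Definition sw (G : eqType) (a b z : G) := if z == a then b else if z == b then a else z.

Lemma swK (G : eqType) (a b : G) : involutive (sw a b).
Proof.
move=> z; rewrite /sw; case: (eqVneq z a) => [->|za].
  by case: (eqVneq b a) => [->|ba]; rewrite ?eqxx.
case: (eqVneq z b) => [->|zb]; first by rewrite eqxx.
by rewrite (negPf za) (negPf zb).
Qed.

Lemma sw_bij (G : eqType) (a b : G) : bijective (sw a b).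
Proof. exists (sw a b); exact: swK. Qed.

Lemma sw_b (G : eqType) (a b : G) : sw a b b = a.
Proof. by rewrite /sw; case: (eqVneq b a) => [->|]; rewrite ?eqxx. Qed.

Lemma sw_other (G : eqType) (a b z : G) : z != a -> z != b -> sw a b z = z.
Proof. by rewrite /sw => /negPf-> /negPf->. Qed.

Lemma fresh (G : eqType) (HG : exists f : nat -> G, bijective f) (s : seq G) :
  exists z, z \notin s.
Proof.
case: HG => f fb; have fi := bij_inj fb.
set l := [seq f i | i <- iota 0 (size s).+1].
case: (boolP (all (mem s) l)) => [/allP H|/allPn [z _ zs]]; last by exists z.
have : size l <= size s.
  apply: uniq_leq_size; first by rewrite map_inj_uniq ?iota_uniq.
  by move=> x /H.
by rewrite size_map size_iota ltnn.
Qed.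
Definition fil (pi : pairpart) m := [seq p <- pi | p != (m, m.+1)].

Lemma flat_del pi m : flat (del_block pi m) = map (relab m) (flat (fil pi m)).
Proof.
rewrite /del_block /fil; elim: pi => //= p pi IH; case: ifP => //= _.
by rewrite flat_cons; congr (_ :: _ :: _); exact: IH.
Qed.

Lemma flat_fil_sub pi m x : x \in flat (fil pi m) -> x \in flat pi.
Proof.
move/flat_in => [q]; rewrite mem_filter => /andP[_ qi] xq; exact: in_flat xq.
Qed.

Lemma uniq_fil pi m : uniq (flat pi) -> uniq (flat (fil pi m)).
Proof.
elim: pi => // p pi IH; rewrite flat_cons /= => /andP[r1 /andP[r2 u]].
case: ifP => _; last exact: IH.
rewrite flat_cons /= IH // andbT; apply/andP; split.
  rewrite inE negb_or; move: r1; rewrite inE negb_or => /andP[-> H].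
  by apply/negP => /flat_fil_sub; rewrite (negPf H).
by apply/negP => /flat_fil_sub; rewrite (negPf r2).
Qed.

Lemma fil_notin pi m x : uniq (flat pi) -> (m, m.+1) \in pi -> x \in flat (fil pi m) ->
  [/\ x != m, x != m.+1 & x \in flat pi].
Proof.
move=> u mi /flat_in [q]; rewrite mem_filter => /andP[qn qi] xq.
split; last exact: in_flat xq.
- apply/negP => /eqP E; subst x.
  by move: qn; rewrite (flat_disj u qi mi xq) ?eqxx // inE eqxx.
- apply/negP => /eqP E; subst x.
  by move: qn; rewrite (flat_disj u qi mi xq) ?eqxx // !inE eqxx orbT.
Qed.

Lemma relab_inj m x y : x != m -> x != m.+1 -> y != m -> y != m.+1 ->
  relab m x = relab m y -> x = y.
Proof. rewrite /relab; case: ifP; case: ifP; lia. Qed.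

Lemma uniq_del pi m : uniq (flat pi) -> (m, m.+1) \in pi -> uniq (flat (del_block pi m)).
Proof.
move=> u mi; rewrite flat_del map_inj_in_uniq ?uniq_fil //.
move=> x y /(fil_notin u mi) [x1 x2 _] /(fil_notin u mi) [y1 y2 _].
exact: relab_inj.
Qed.

Lemma in_del pi m a : uniq (flat pi) -> (m, m.+1) \in pi -> (a, a.+1) \in pi -> a != m ->
  (relab m a, (relab m a).+1) \in del_block pi m.
Proof.
move=> u mi ai am.
have sep : a.+1 < m \/ m.+1 < a.
  have h1 : a != m.+1.
    apply/negP => /eqP E; subst a.
    move: (flat_disj u ai mi (x := m.+1)); rewrite !inE !eqxx ?orbT => /(_ isT isT) [E]; lia.
  have h2 : a.+1 != m.
    apply/negP => /eqP E; subst m.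
    move: (flat_disj u ai mi (x := a.+1)); rewrite !inE !eqxx ?orbT => /(_ isT isT) [E]; lia.
  lia.
apply/mapP; exists (a, a.+1); first by rewrite mem_filter ai andbT; apply/negP => /eqP [E]; rewrite E eqxx in am.
rewrite /= /relab; congr pair; case: ifP; case: ifP; lia.
Qed.

Lemma block_avoid pi p m : uniq (flat pi) -> p \in pi -> (m, m.+1) \in pi -> p != (m, m.+1) ->
  [/\ p.1 != m, p.1 != m.+1, p.2 != m & p.2 != m.+1].
Proof.
move=> u pin mi pn.
have H : forall x, x \in [:: p.1; p.2] -> x \in [:: m; m.+1] -> False.
  by move=> x xp xm; rewrite (flat_disj u pin mi xp xm) eqxx in pn.
split; apply/negP => /eqP E.
- by apply: (H m); rewrite -?E !inE eqxx ?orbT.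
- by apply: (H m.+1); rewrite -?E !inE eqxx ?orbT.
- by apply: (H m); rewrite -?E !inE eqxx ?orbT.
- by apply: (H m.+1); rewrite -?E !inE eqxx ?orbT.
Qed.

Lemma sep_blocks pi a m : uniq (flat pi) -> (a, a.+1) \in pi -> (m, m.+1) \in pi -> a != m ->
  a.+1 < m \/ m.+1 < a.
Proof.
move=> u ai mi am.
have [/= h1 h2 h3 h4] := block_avoid u ai mi (p := (a, a.+1)) (m := m) ltac:(apply/negP => /eqP [E]; by rewrite E eqxx in am).
lia.
Qed.

Ltac split_ifs := repeat match goal with |- context [if ?c then _ else _] =>
  lazymatch c with context [if _ then _ else _] => fail | _ => case: (boolP c) => ? end end.
Ltac rl := rewrite /relab; split_ifs; lia.

Lemma del_del pi m m0 : uniq (flat pi) -> (m, m.+1) \in pi -> (m0, m0.+1) \in pi -> m != m0 ->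
  del_block (del_block pi m) (relab m m0) = del_block (del_block pi m0) (relab m0 m).
Proof.
move=> u mi m0i mm0.
have sp := sep_blocks u mi m0i mm0.
have : {subset pi <= pi} by [].
elim: {-2}pi => // p s IH /= sub.
have pin : p \in pi by apply: sub; rewrite inE eqxx.
have {}IH := IH (fun x xs => sub x ltac:(by rewrite inE xs orbT)).
rewrite /del_block /=.
case: (eqVneq p (m, m.+1)) => [E|pm]; case: (eqVneq p (m0, m0.+1)) => [E'|pm0] /=.
- by rewrite E in E'; case: E' => E'; rewrite E' eqxx in mm0.
- rewrite E /=.
  have -> : (relab m0 m, relab m0 m.+1) == (relab m0 m, (relab m0 m).+1) by apply/eqP; congr pair; rl.
  exact: IH.
- rewrite E' /=.
  have -> : (relab m m0, relab m m0.+1) == (relab m m0, (relab m m0).+1) by apply/eqP; congr pair; rl.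
  exact: IH.
- have [a1 a2 a3 a4] := block_avoid u pin mi pm.
  have [b1 b2 b3 b4] := block_avoid u pin m0i pm0.
  case: p pin sub pm pm0 a1 a2 a3 a4 b1 b2 b3 b4 => x y /= pin _ pm pm0 a1 a2 a3 a4 b1 b2 b3 b4.
  have -> : (relab m x, relab m y) != (relab m m0, (relab m m0).+1).
    apply/negP => /eqP [E1 E2]; move: E1 E2; rl.
  have -> : (relab m0 x, relab m0 y) != (relab m0 m, (relab m0 m).+1).
    apply/negP => /eqP [E1 E2]; move: E1 E2; rl.
  rewrite /=; congr (_ :: _); last exact: IH.
  congr pair; rl.
Qed.

Lemma del_seq_comm (G : Type) (g : nat -> G) m m0 : m.+1 < m0 \/ m0.+1 < m ->
  del_seq (del_seq g m) (relab m m0) = del_seq (del_seq g m0) (relab m0 m).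
Proof.
move=> sp; apply: FunctionalExtensionality.functional_extensionality => i.
rewrite /del_seq /relab; split_ifs; first [reflexivity | (congr g; lia) | (exfalso; lia)].
Qed.

Definition Aok (G : Type) (g : nat -> G) m n :=
  g m = g (m + 2) /\ (forall s, 1 <= s -> s <= n.*2 -> s <> m.+1 -> g m.+1 <> g s).

Lemma adopted_SS (G : Type) n pi (g : nat -> G) : adopted_rec n.+2 pi g =
  forall m, 1 <= m -> m <= n.+2.*2 - 2 -> (m, m.+1) \in pi ->
    Aok g m n.+2 /\ adopted_rec n.+1 (del_block pi m) (del_seq g m).
Proof. by []. Qed.

Lemma ds_le (G : Type) (g : nat -> G) m i : i <= m -> del_seq g m i = g i.
Proof. by rewrite /del_seq => ->. Qed.
Lemma ds_gt (G : Type) (g : nat -> G) m i : m < i -> del_seq g m i = g (i + 2).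
Proof. by move=> h; rewrite /del_seq leqNgt h. Qed.

Lemma A_back (G : Type) n (g : nat -> G) m0 m : 1 <= m0 -> 1 <= m ->
  m0 <= n.+2.*2 - 2 -> m <= n.+2.*2 - 2 -> m.+1 < m0 \/ m0.+1 < m ->
  Aok g m0 n.+2 -> Aok (del_seq g m0) (relab m0 m) n.+1 -> Aok g m n.+2.
Proof.
move=> h1 h2 h3 h4 sp [E0 U0] [E1 U1].
have key : forall x, x != m0.+1 -> x != m0 + 2 -> del_seq g m0 (relab m0 x) = g x.
  move=> x ? ?; rewrite /del_seq /relab; split_ifs; first [reflexivity | (congr g; lia) | (exfalso; lia)].
have r1 : relab m0 m.+1 = (relab m0 m).+1 by rl.
have r2 : relab m0 (m + 2) = relab m0 m + 2 by rl.
have gm1 : g m.+1 = del_seq g m0 (relab m0 m).+1 by rewrite -r1 key //; lia.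
have gen : forall t, 1 <= t -> t <= n.+2.*2 -> t != m0.+1 -> t != m0 + 2 -> t <> m.+1 ->
    g m.+1 <> g t.
  move=> t t1 t2 t3 t4 t5; rewrite gm1 -(key t) //; apply: U1; rl.
split.
- have -> : g (m + 2) = del_seq g m0 (relab m0 m + 2) by rewrite -r2 key //; lia.
  rewrite -E1.
  case: (eqVneq m (m0 + 2)) => [Em|Em].
  + rewrite Em -E0 (_ : relab m0 (m0 + 2) = m0); last by rl.
    by rewrite ds_le.
  + by rewrite key //; lia.
- move=> s s1 s2 sn.
  case: (eqVneq s m0.+1) => [->|s01].
    move=> E; apply: (U0 m.+1); rewrite ?E //; lia.
  case: (eqVneq s (m0 + 2)) => [->|s02]; last exact: gen.
  rewrite -E0; apply: gen; lia.
Qed.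

Lemma A_fwd (G : Type) n (g : nat -> G) m0 m : 1 <= m0 -> 1 <= m ->
  m0 <= n.+2.*2 - 2 -> m <= n.+2.*2 - 2 -> m.+1 < m0 \/ m0.+1 < m ->
  Aok g m0 n.+2 -> Aok g m n.+2 -> Aok (del_seq g m) (relab m m0) n.+1.
Proof.
move=> h1 h2 h3 h4 sp [E0 U0] [Em Um]; split.
- case: (ltnP m0 m) => hm.
  + rewrite (_ : relab m m0 = m0); last by rl.
    by rewrite !ds_le //; lia.
  + rewrite (_ : relab m m0 = m0 - 2); last by rl.
    rewrite [del_seq g m (m0 - 2 + 2)]ds_gt; last lia.
    rewrite (_ : m0 - 2 + 2 + 2 = m0 + 2); last lia.
    case: (eqVneq m0 (m + 2)) => [E|ne]; first rewrite {1 2}E.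
    * rewrite ds_le; last lia. rewrite (_ : m + 2 - 2 = m); last lia. by rewrite Em -E.
    * by rewrite ds_gt; [rewrite (_ : m0 - 2 + 2 = m0) //; lia | lia].
- move=> s s1 s2 sn.
  rewrite (_ : (relab m m0).+1 = relab m m0.+1); last by rl.
  have -> : del_seq g m (relab m m0.+1) = g m0.+1.
    rewrite /del_seq /relab; split_ifs; first [reflexivity | (congr g; lia) | (exfalso; lia)].
  move: sn; rewrite /del_seq; case: ifP => hs sn; apply: U0; move: sn; rl.
Qed.

Lemma char (G : Type) n : forall pi (g : nat -> G) m0, uniq (flat pi) -> 1 <= m0 ->
  m0 <= n.+2.*2 - 2 -> (m0, m0.+1) \in pi -> Aok g m0 n.+2 ->
  adopted_rec n.+1 (del_block pi m0) (del_seq g m0) -> adopted_rec n.+2 pi g.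
Proof.
elim: n => [|n IH] pi g m0 u h1 h2 m0i A0 Had; rewrite adopted_SS => m hm1 hm2 mi.
- case: (eqVneq m m0) => [->|mm0]; first by split.
  have sp := sep_blocks u mi m0i mm0; exfalso; lia.
case: (eqVneq m m0) => [->|mm0]; first by split.
have sp := sep_blocks u mi m0i mm0.
have m0m : m0 != m by rewrite eq_sym.
move: Had; rewrite adopted_SS => Had.
have [Am' Hrest] := Had (relab m0 m) ltac:(rl) ltac:(rl) (in_del u m0i mi mm0).
have Am : Aok g m n.+3 := A_back h1 hm1 h2 hm2 sp A0 Am'.
split => //.
apply: (IH (del_block pi m) (del_seq g m) (relab m m0)).
- exact: uniq_del.
- rl.
- rl.
- exact: in_del.
- exact: A_fwd.
- by rewrite del_del // del_seq_comm.
Qed.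

Lemma existence (G : eqType) (HG : exists f : nat -> G, bijective f) n :
  forall pi, uniq (flat pi) -> exists g : nat -> G, adopted_rec n.+1 pi g.
Proof.
have [f fb] := HG; have fi := bij_inj fb.
elim: n => [|n IH] pi u.
  exists f => /= E; by have := fi _ _ E.
case: (boolP (has (fun m0 => (m0, m0.+1) \in pi) (iota 1 (n.+2.*2 - 2)))).
- move/hasP => [m0]; rewrite mem_iota => hm m0i.
  have [h hh] := IH _ (uniq_del u m0i).
  have [z zn] := fresh HG [seq h i | i <- iota 0 (n.+2.*2)].
  pose g i := if i <= m0 then h i else if i == m0.+1 then z else h (i - 2).
  have dg : del_seq g m0 = h.
    apply: FunctionalExtensionality.functional_extensionality => i.
    rewrite /del_seq /g; case: ifP => hi; first by rewrite hi.
    rewrite ifF; last lia. rewrite ifF; last lia. congr h; lia.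
  exists g; apply: (char u (m0 := m0)); first lia; first lia; first exact: m0i.
  + split.
    * rewrite /g ifT; last lia. rewrite ifF; last lia. rewrite ifF; last lia. congr h; lia.
    * move=> s s1 s2 sn; rewrite /g ifF; last lia. rewrite eqxx.
      move=> E; move: zn; rewrite E; apply/negP/negPn/mapP.
      case: ifP => hs; [exists s | rewrite ifF; last lia; exists (s - 2)] => //;
        rewrite mem_iota; lia.
  + by rewrite dg.
- move/hasPn => H; exists (fun _ => f 0); rewrite adopted_SS => m h1 h2 mi; exfalso.
  by move: (H m); rewrite mem_iota mi => /(_ ltac:(lia)).
Qed.

Lemma pp_uniq k pi : is_pairpart k pi -> uniq (flat pi).
Proof. by case=> _ H; rewrite /flat (perm_uniq H) iota_uniq. Qed.

Lemma pp_mem k pi x : is_pairpart k pi -> (x \in flat pi) = (1 <= x <= k).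
Proof. case=> _ H; rewrite /flat (perm_mem H) mem_iota; apply/idP/idP; lia. Qed.

Lemma size_flat pi : size (flat pi) = (size pi).*2.
Proof. by elim: pi => // p pi IH; rewrite flat_cons /= IH. Qed.

Lemma adj_aux k pi (H : is_NC_pairpart k pi) w : forall a b, (a, b) \in pi -> b < k ->
  b - a <= w -> exists m0, (m0, m0.+1) \in pi /\ m0.+1 < k.
Proof.
case: H => [[lt pe] nc]; have u : uniq (flat pi) by apply: (pp_uniq (conj lt pe)).
have mem x : (x \in flat pi) = (1 <= x <= k) by apply: (pp_mem x (conj lt pe)).
elim: w => [|w IH] a b ab bk hw; first by have := lt _ ab; rewrite /=; lia.
have alb := lt _ ab; rewrite /= in alb.
case: (eqVneq b a.+1) => [E|ne]; first by exists a; rewrite -E.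
have a1 : a \in flat pi by apply: (in_flat ab); rewrite inE eqxx.
have : a.+1 \in flat pi by rewrite mem; move: a1; rewrite mem; lia.
move/flat_in => [[c d] cd]; rewrite !inE /= => /orP[/eqP E|/eqP E]; subst.
- have cdl := lt _ cd; rewrite /= in cdl.
  case: (ltnP d b) => hdb.
    apply: (IH a.+1 d cd); lia.
  case: (eqVneq d b) => [Edb|ndb].
    have := flat_disj u cd ab (x := b).
    rewrite !inE /= Edb eqxx !orbT => /(_ isT isT) [E]; lia.
  exfalso; apply: nc; exists a, a.+1, b, d; split => //; lia.
- have cdl := lt _ cd; rewrite /= in cdl.
  case: (eqVneq c a) => [E|ca].
    subst c; have := flat_disj u cd ab (x := a); rewrite !inE !eqxx ?orbT => /(_ isT isT) [E]; lia.
  exfalso; apply: nc; exists c, a, a.+1, b; split => //; lia.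
Qed.

Lemma adj n pi : is_NC_pairpart n.+2.*2 pi ->
  exists m0, [/\ 1 <= m0, m0 <= n.+2.*2 - 2 & (m0, m0.+1) \in pi].
Proof.
move=> H; have [[lt pe] nc] := H.
have u : uniq (flat pi) by apply: (pp_uniq (conj lt pe)).
have mem x : (x \in flat pi) = (1 <= x <= n.+2.*2) by apply: (pp_mem x (conj lt pe)).
have sz : size pi = n.+2.
  have := perm_size pe; rewrite size_iota -/(flat pi) size_flat; lia.
have [a [b [ab bk]]] : exists a b, (a, b) \in pi /\ b < n.+2.*2.
  case: pi sz u mem {H lt pe nc} => [|[p1 p2] [|[q1 q2] r]] // _ u mem.
  have hp : p2 <= n.+2.*2 by move: (mem p2); rewrite !flat_cons !inE eqxx orbT => /esym; lia.
  have hq : q2 <= n.+2.*2 by move: (mem q2); rewrite !flat_cons !inE eqxx !orbT => /esym; lia.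
  have pq : p2 != q2.
    by move: u; rewrite !flat_cons /= => /andP[_ /andP[+ _]]; rewrite !inE !negb_or => /and3P[_ ->].
  case: (ltnP p2 n.+2.*2) => hp2.
    by exists p1, p2; rewrite inE eqxx.
  by exists q1, q2; rewrite !inE eqxx orbT; lia.
have [m0 [m0i m0k]] := adj_aux H ab bk (leqnn _).
exists m0; split => //.
have : m0 \in flat pi by apply: (in_flat m0i); rewrite inE eqxx.
by rewrite mem => /andP[].
Qed.

Lemma del_NC n pi m : is_NC_pairpart n.+2.*2 pi -> (m, m.+1) \in pi ->
  is_NC_pairpart n.+1.*2 (del_block pi m).
Proof.
move=> [[lt pe] nc] mi.
have u : uniq (flat pi) by apply: (pp_uniq (conj lt pe)).
have mem x : (x \in flat pi) = (1 <= x <= n.+2.*2) by apply: (pp_mem x (conj lt pe)).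
have mb : 1 <= m /\ m.+1 <= n.+2.*2.
  have := mem m; have := mem m.+1.
  rewrite (in_flat mi (x := m)) ?(in_flat mi (x := m.+1)) ?inE ?eqxx ?orbT //; lia.
have fil_mem q : q \in fil pi m -> q \in pi /\ q != (m, m.+1).
  by rewrite mem_filter => /andP[].
split; [split|].
- move=> p /mapP [[x y] qf ->] /=.
  have [qi qn] := fil_mem _ qf.
  have [/= a1 a2 a3 a4] := block_avoid u qi mi qn.
  have := lt _ qi; rewrite /=; rl.
- apply: uniq_perm; [exact: uniq_del | exact: iota_uniq |] => x.
  rewrite -/(flat _) flat_del mem_iota; apply/mapP/idP.
  + move=> [y yf ->]; have [y1 y2] := fil_notin u mi yf.
    rewrite mem => yb; rl.
  + move=> hx; exists (if x < m then x else x + 2); last rl.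
    have : (if x < m then x else x + 2) \in flat pi by rewrite mem; move: hx; rl.
    move/flat_in => [q qi yq]; apply: (in_flat _ yq).
    rewrite mem_filter qi andbT; apply/negP => /eqP E.
    move: yq; rewrite E !inE => /orP[/eqP|/eqP]; move: hx; rewrite /=; rl.
- move=> [a [b [c [d [h1 h2 h3 ac bd]]]]].
  move: ac bd => /mapP [[a' c'] /fil_mem [ai an] [E1 E2]] /mapP [[b' d'] /fil_mem [bi bn] [E3 E4]].
  have [/= x1 x2 x3 x4] := block_avoid u ai mi an.
  have [/= y1 y2 y3 y4] := block_avoid u bi mi bn.
  apply: nc; exists a', b', c', d'; split => //; move: h1 h2 h3; rewrite E1 E2 E3 E4; rl.
Qed.

Definition J m0 i := if i <= m0 then i else if i == m0 + 2 then m0 else i - 2.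

Lemma J_spec (G : Type) (g : nat -> G) m0 i : 1 <= m0 -> g m0 = g (m0 + 2) -> i != m0.+1 ->
  g i = del_seq g m0 (J m0 i).
Proof.
move=> h1 E0 ne; rewrite /J /del_seq; split_ifs;
  first [reflexivity | (congr g; lia) | (exfalso; lia) | (rewrite E0; congr g; lia) | (rewrite -E0; congr g; lia)].
Qed.

Lemma size_undup_eqi (T : eqType) (s1 s2 : seq T) : s1 =i s2 -> size (undup s1) = size (undup s2).
Proof.
move=> E; apply: perm_size; apply: uniq_perm; rewrite ?undup_uniq // => x.
by rewrite !mem_undup E.
Qed.

Lemma size_undup_cons (T : eqType) (x : T) s : x \notin s -> size (undup (x :: s)) = (size (undup s)).+1.
Proof. by move=> h /=; rewrite (negPf h). Qed.

Lemma count_lem (G : eqType) n : forall pi (g : nat -> G), is_NC_pairpart n.+1.*2 pi ->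
  adopted_rec n.+1 pi g -> size (undup [seq g i | i <- iota 1 n.+1.*2]) = n.+2.
Proof.
elim: n => [|n IH] pi g H Had.
  by rewrite /= inE; case: eqP.
have [m0 [h1 h2 m0i]] := adj H.
move: Had; rewrite adopted_SS => Had.
have [[E0 U0] Hd] := Had m0 h1 h2 m0i.
have {}IH := IH _ _ (del_NC H m0i) Hd.
have dgv j : del_seq g m0 j = g (if j <= m0 then j else j + 2) by rewrite /del_seq; case: ifP.
have nin : g m0.+1 \notin [seq del_seq g m0 i | i <- iota 1 n.+1.*2].
  apply/mapP => [[j]]; rewrite mem_iota dgv => hj E.
  by apply: (U0 (if j <= m0 then j else j + 2)) => //; move: hj; rl.
rewrite (@size_undup_eqi _ _ (g m0.+1 :: [seq del_seq g m0 i | i <- iota 1 n.+1.*2])).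
  by rewrite size_undup_cons // IH.
move=> x; rewrite inE; apply/mapP/idP.
- move=> [i]; rewrite mem_iota => hi ->.
  case: (eqVneq i m0.+1) => [->|ne]; first by rewrite eqxx.
  apply/orP; right; apply/mapP; exists (J m0 i); last exact: J_spec.
  rewrite mem_iota /J; move: hi; rl.
- case/orP => [/eqP ->|/mapP [j]]; first by exists m0.+1; rewrite // mem_iota; lia.
  rewrite mem_iota dgv => hj ->; exists (if j <= m0 then j else j + 2) => //.
  rewrite mem_iota; move: hj; rl.
Qed.

Lemma uniq_lem (G : eqType) n : forall pi (g h : nat -> G), is_NC_pairpart n.+1.*2 pi ->
  adopted_rec n.+1 pi g -> adopted_rec n.+1 pi h ->
  exists sigma : G -> G, bijective sigma /\
    forall i, 1 <= i -> i <= n.+1.*2 -> sigma (g i) = h i.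
Proof.
elim: n => [|n IH] pi g h H Hg Hh.
  move: Hg Hh => /= Hg Hh.
  pose s1 := sw (h 1) (g 1).
  exists (sw (h 2) (s1 (g 2)) \o s1); split.
    exact: bij_comp (sw_bij _ _) (sw_bij _ _).
  have s1i : injective s1 by apply: bij_inj; apply: sw_bij.
  move=> i i1 i2; have [->|->] : i = 1 \/ i = 2 by lia.
  - rewrite /= {2}/s1 sw_b sw_other //; apply/eqP => // E.
    by apply: Hg; apply: s1i; rewrite -E /s1 sw_b.
  - by rewrite /= sw_b.
have [m0 [h1 h2 m0i]] := adj H.
move: Hg Hh; rewrite !adopted_SS => Hg Hh.
have [[Eg Ug] Hdg] := Hg m0 h1 h2 m0i.
have [[Eh Uh] Hdh] := Hh m0 h1 h2 m0i.
have [sigma [sb si]] := IH _ _ _ (del_NC H m0i) Hdg Hdh.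
exists (sw (h m0.+1) (sigma (g m0.+1)) \o sigma); split.
  exact: bij_comp (sw_bij _ _) sb.
have sinj := bij_inj sb.
move=> i i1 i2 /=.
case: (eqVneq i m0.+1) => [->|ne]; first by rewrite sw_b.
have E : sigma (g i) = h i.
  rewrite (J_spec h1 Eg ne) (J_spec h1 Eh ne) si //; rewrite /J; rl.
rewrite E sw_other //.
- apply/eqP => E'; apply: (Uh i i1 i2 (elimN eqP ne)); by rewrite E'.
- apply/eqP => E'; rewrite -E in E'.
  apply: (Ug i i1 i2 (elimN eqP ne)); by rewrite (sinj _ _ E').
Qed.

Theorem mainTheorem3 (G : eqType) (HG : exists f : nat -> G, bijective f)
  (k : nat) (pi : pairpart) (Hk : 0 < k) (Hev : ~~ odd k)
  (Hpi : is_NC_pairpart k pi) :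
  (exists g : nat -> G, adopted k pi g) /\
  (forall g h : nat -> G, adopted k pi g -> adopted k pi h -> equiv_seq k g h) /\
  (forall g : nat -> G, adopted k pi g ->
     size (undup [seq g i | i <- iota 1 k]) = k./2.+1).
Proof.
have Ek : k = (k./2).*2 by rewrite -{1}(odd_double_half k) (negPf Hev).
case Eh : k./2 => [|n]; first by rewrite Eh in Ek; rewrite Ek in Hk.
rewrite Eh in Ek; move: Hpi; rewrite /adopted /equiv_seq Eh Ek => Hpi.
split; [|split].
- exact: existence HG n pi (pp_uniq Hpi.1).
- move=> g h Hg Hh; exact: uniq_lem Hpi Hg Hh.
- move=> g Hg; exact: count_lem Hpi Hg.
Qed.
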